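(* Let $\mathbf P=(P,\leq,0,1)$ be a bounded poset which is the horizontal sum of bounded posets $\mathbf P_{\alpha}=(P_{\alpha},\leq_{\alpha},0,1)$, $\alpha\in\Lambda$. Then the Dedekind-MacNeille completion $\mathrm{DM}(\mathbf P)$ is order-isomorphic to the horizontal sum of the complete lattices $\mathrm{DM}(\mathbf P_{\alpha})$, $\alpha\in\Lambda$.
   Context: The horizontal sum of a family of bounded posets is obtained from their disjoint union by identifying all the bottom elements into a single element $0$ and all the top elements into a single element $1$; two elements are comparable only if one of them is $0$ or $1$ or both lie in the same summand and are comparable there. For a poset $\mathbf P$ and $M\subseteq P$, $U(M)$ and $L(M)$ denote the sets of upper and lower bounds of $M$. The Dedekind-MacNeille completion $\mathrm{DM}(\mathbf P)$ is the complete lattice $(\{B\subseteq P\mid L(U(B))=B\},\subseteq)$, into which $P$ embeds via $x\mapsto L(\{x\})$. *)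

(* Defs.v *)
Definition is_bposet {T : Type} (le : T -> T -> Prop) (b t : T) : Prop :=
  (forall x, le x x) /\
  (forall x y, le x y -> le y x -> x = y) /\
  (forall x y z, le x y -> le y z -> le x z) /\
  (forall x, le b x) /\
  (forall x, le x t).

Definition Ub {T : Type} (le : T -> T -> Prop) (M : T -> Prop) : T -> Prop :=
  fun u => forall x, M x -> le x u.
Definition Lb {T : Type} (le : T -> T -> Prop) (M : T -> Prop) : T -> Prop :=
  fun l => forall x, M x -> le l x.

Definition is_cut {T : Type} (le : T -> T -> Prop) (B : T -> Prop) : Prop :=
  forall x, Lb le (Ub le B) x <-> B x.

Definition DM {T : Type} (le : T -> T -> Prop) : Type :=
  { B : T -> Prop | is_cut le B }.
Definition DM_le {T : Type} (le : T -> T -> Prop) (A B : DM le) : Prop :=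
  forall x, proj1_sig A x -> proj1_sig B x.

Lemma is_cut_LU {T : Type} (le : T -> T -> Prop) (M : T -> Prop) :
  is_cut le (Lb le (Ub le M)).
Proof.
  intros x; split.
  - intros H u Hu. apply H. intros y Hy. apply Hy. exact Hu.
  - intros H u Hu. apply Hu. exact H.
Qed.

Lemma is_cut_full {T : Type} (le : T -> T -> Prop) :
  is_cut le (fun _ => True).
Proof. intros x; split; [auto | intros _ u Hu; apply Hu; exact I]. Qed.

Definition DM_bot {T : Type} (le : T -> T -> Prop) : DM le :=
  exist _ (Lb le (Ub le (fun _ => False))) (is_cut_LU le (fun _ => False)).
Definition DM_top {T : Type} (le : T -> T -> Prop) : DM le :=
  exist _ (fun _ => True) (is_cut_full le).

(** * Horizontal sum of a family of bounded posets (T a, le a, bot a, top a)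
    indexed by Lam: a new bottom, a new top, and the elements of each summand
    other than its bottom and top. *)
Inductive hcar (Lam : Type) (T : Lam -> Type) (bot top : forall a, T a) : Type :=
  | HBot : hcar Lam T bot top
  | HTop : hcar Lam T bot top
  | HIn (a : Lam) (x : T a) (nb : x <> bot a) (nt : x <> top a) : hcar Lam T bot top.

Arguments HBot {Lam T bot top}.
Arguments HTop {Lam T bot top}.
Arguments HIn {Lam T bot top} a x nb nt.

Definition hle (Lam : Type) (T : Lam -> Type)
    (le : forall a, T a -> T a -> Prop) (bot top : forall a, T a)
    (x y : hcar Lam T bot top) : Prop :=
  match x, y with
  | HBot, _ => True
  | _, HTop => True
  | HIn a u _ _, HIn b v _ _ =>
      exists e : a = b, le b (eq_rect a T u b e) v
  | _, _ => False
  end.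

Definition order_iso {A B : Type} (leA : A -> A -> Prop) (leB : B -> B -> Prop) : Prop :=
  exists (f : A -> B) (g : B -> A),
    (forall x, g (f x) = x) /\ (forall y, f (g y) = y) /\
    (forall x y, leA x y <-> leB (f x) (f y)).

(* Main.v *)
Require Import Defs.
From Stdlib Require Import Classical ClassicalEpsilon FunctionalExtensionality PropExtensionality ProofIrrelevance.

Lemma dm_eq {X : Type} (r : X -> X -> Prop) (A B : DM r) :
  (forall x, proj1_sig A x <-> proj1_sig B x) -> A = B.
Proof.
  destruct A as [A pA], B as [B pB]; simpl; intros E.
  assert (A = B) by (apply functional_extensionality; intro x; apply propositional_extensionality; auto).
  subst B. rewrite (proof_irrelevance _ pA pB). reflexivity.
Qed.

Lemma sub_LU {X : Type} (r : X -> X -> Prop) (M : X -> Prop) x :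
  M x -> Lb r (Ub r M) x.
Proof. intros Hx u Hu. apply Hu. exact Hx. Qed.

Lemma cut_bot {X : Type} (r : X -> X -> Prop) (b : X) (M : X -> Prop) :
  (forall x, r b x) -> is_cut r M -> M b.
Proof. intros Hb Hc. apply (proj1 (Hc b)). intros u _. apply Hb. Qed.

Lemma cut_down {X : Type} (r : X -> X -> Prop) (M : X -> Prop) z w :
  (forall x y z, r x y -> r y z -> r x z) -> is_cut r M -> M z -> r w z -> M w.
Proof.
  intros Ht Hc Hz Hw. apply (proj1 (Hc w)). intros u Hu. eapply Ht. exact Hw. apply Hu. exact Hz.
Qed.

Section S.
Variables (Lam : Type) (T : Lam -> Type)
    (le : forall a, T a -> T a -> Prop) (bot top : forall a, T a)
    (hP : forall a, is_bposet (le a) (bot a) (top a)).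

Notation HH := (hcar Lam T bot top).
Notation hl := (hle Lam T le bot top).
Notation HH' := (hcar Lam (fun a => DM (le a)) (fun a => DM_bot (le a)) (fun a => DM_top (le a))).
Notation hl' := (hle Lam (fun a => DM (le a)) (fun a => DM_le (le a))
         (fun a => DM_bot (le a)) (fun a => DM_top (le a))).

Lemma le_refl a x : le a x x. Proof. apply (hP a). Qed.
Lemma le_anti a x y : le a x y -> le a y x -> x = y. Proof. apply (hP a). Qed.
Lemma le_trans a x y z : le a x y -> le a y z -> le a x z. Proof. apply (hP a). Qed.
Lemma le_bot a x : le a (bot a) x. Proof. apply (hP a). Qed.
Lemma le_top a x : le a x (top a). Proof. apply (hP a). Qed.

Lemma hl_top (z : HH) : hl z HTop. Proof. destruct z; simpl; auto. Qed.
Lemma hl_in_iff a x y nb nt nb' nt' :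
  hl (HIn a x nb nt) (HIn a y nb' nt') <-> le a x y.
Proof.
  simpl; split.
  - intros [e H]. rewrite (proof_irrelevance _ e eq_refl) in H. exact H.
  - intros H. exists eq_refl. exact H.
Qed.
Lemma hl_in_idx a b x y nb nt nb' nt' :
  hl (HIn a x nb nt) (HIn b y nb' nt') -> a = b.
Proof. simpl. intros [e _]. exact e. Qed.

Lemma hl_trans (x y z : HH) : hl x y -> hl y z -> hl x z.
Proof.
  destruct x as [| |a x nb nt]; destruct y as [| |b y nb' nt']; destruct z as [| |c z nb'' nt''];
  simpl; auto; try tauto.
  intros [e1 H1] [e2 H2]. destruct e1, e2. simpl in *. exists eq_refl. simpl.
  eapply le_trans; eauto.
Qed.

Lemma LU0_iff (z : HH) : Lb hl (Ub hl (fun _ => False)) z <-> z = HBot.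
Proof.
  split.
  - intros H. specialize (H HBot (fun _ f => False_ind _ f)). destruct z; simpl in H; tauto.
  - intros ->. intros u _. simpl. exact I.
Qed.

Definition comp a (C : HH -> Prop) : T a -> Prop :=
  fun x => x = bot a \/ exists nb nt, C (HIn a x nb nt).

Lemma struct (C : DM hl) : ~ proj1_sig C HTop ->
  forall a, (exists x nb nt, proj1_sig C (HIn a x nb nt)) ->
  exists y ny1 ny2, Ub hl (proj1_sig C) (HIn a y ny1 ny2).
Proof.
  intros nT a [x0 [nb0 [nt0 H0]]].
  assert (NL : ~ Lb hl (Ub hl (proj1_sig C)) HTop).
  { intro L. apply nT. apply (proj2_sig C). exact L. }
  apply not_all_ex_not in NL. destruct NL as [u Hu].
  apply imply_to_and in Hu. destruct Hu as [Ub1 Nu].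
  destruct u as [| |b y ny1 ny2].
  - specialize (Ub1 _ H0). simpl in Ub1. contradiction.
  - simpl in Nu. tauto.
  - pose proof (Ub1 _ H0) as E. apply hl_in_idx in E. subst b. eauto.
Qed.

Lemma ub_comp (C : HH -> Prop) a v nb nt :
  Ub hl C (HIn a v nb nt) -> Ub (le a) (comp a C) v.
Proof.
  intros Hu x [-> | [nb' [nt' Hx]]].
  - apply le_bot.
  - specialize (Hu _ Hx). apply hl_in_iff in Hu. exact Hu.
Qed.

Lemma comp_cut (C : DM hl) (nT : ~ proj1_sig C HTop) a
  (Ha : exists x nb nt, proj1_sig C (HIn a x nb nt)) :
  is_cut (le a) (comp a (proj1_sig C)).
Proof.
  destruct (struct C nT a Ha) as [y [ny1 [ny2 Hy]]].
  intro x; split; [| apply sub_LU].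
  intros Lx.
  destruct (classic (x = bot a)) as [Eb | Nb]; [left; exact Eb |].
  destruct (classic (x = top a)) as [Et | Nt].
  - exfalso. subst x. apply ny2. apply le_anti. apply le_top. apply Lx. eapply ub_comp; eauto.
  - right. exists Nb, Nt. apply (proj2_sig C). intros u Hu.
    destruct u as [| |b v nv1 nv2].
    + destruct Ha as [x0 [nb0 [nt0 H0]]]. specialize (Hu _ H0). simpl in Hu. contradiction.
    + apply hl_top.
    + destruct Ha as [x0 [nb0 [nt0 H0]]]. pose proof (Hu _ H0) as E. apply hl_in_idx in E. subst b.
      apply hl_in_iff. apply Lx. eapply ub_comp; eauto.
Qed.

Lemma comp_nbot (C : DM hl) (nT : ~ proj1_sig C HTop) a
  (Ha : exists x nb nt, proj1_sig C (HIn a x nb nt)) :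
  exist _ (comp a (proj1_sig C)) (comp_cut C nT a Ha) <> DM_bot (le a).
Proof.
  intro E. apply (f_equal (@proj1_sig _ _)) in E. simpl in E.
  destruct Ha as [x0 [nb0 [nt0 H0]]].
  assert (Hc : comp a (proj1_sig C) x0) by (right; eauto).
  rewrite E in Hc. apply nb0. apply le_anti. apply Hc. intros z f; contradiction. apply le_bot.
Qed.

Lemma comp_ntop (C : DM hl) (nT : ~ proj1_sig C HTop) a
  (Ha : exists x nb nt, proj1_sig C (HIn a x nb nt)) :
  exist _ (comp a (proj1_sig C)) (comp_cut C nT a Ha) <> DM_top (le a).
Proof.
  intro E. apply (f_equal (@proj1_sig _ _)) in E. simpl in E.
  destruct Ha as [x0 [nb0 [nt0 H0]]].
  assert (Hc : comp a (proj1_sig C) (top a)) by (rewrite E; exact I).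
  destruct Hc as [Hc | [nb [nt Hc]]].
  - apply nb0. apply le_anti. rewrite <- Hc. apply le_top. apply le_bot.
  - apply nt; reflexivity.
Qed.

Definition F (C : DM hl) : HH' :=
 match excluded_middle_informative (proj1_sig C HTop) with
 | left _ => HTop
 | right nT =>
   match excluded_middle_informative (exists a x nb nt, proj1_sig C (HIn a x nb nt)) with
   | right _ => HBot
   | left ex =>
     let (a, Ha) := constructive_indefinite_description _ ex in
     HIn a (exist _ (comp a (proj1_sig C)) (comp_cut C nT a Ha))
       (comp_nbot C nT a Ha) (comp_ntop C nT a Ha)
   end
 end.

Definition Gset a (B : T a -> Prop) : HH -> Prop :=
  fun z => match z with
           | HBot => True
           | HTop => False
           | HIn b y _ _ => exists e : b = a, B (eq_rect b T y a e)
           end.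

Lemma dm_interior a (B : DM (le a)) :
  B <> DM_bot (le a) -> B <> DM_top (le a) ->
  (exists x, proj1_sig B x /\ x <> bot a /\ x <> top a) /\ ~ proj1_sig B (top a).
Proof.
  intros nb nt.
  assert (NT : ~ proj1_sig B (top a)).
  { intro Ht. apply nt. apply dm_eq. intro x; simpl; split; auto. intros _.
    eapply (cut_down (le a)). apply le_trans. apply (proj2_sig B). exact Ht. apply le_top. }
  split; [| exact NT].
  apply NNPP. intro N. apply nb. apply dm_eq. intro x; simpl. split.
  - intros Hx. destruct (classic (x = bot a)) as [-> | Nx].
    + intros u _. apply le_bot.
    + exfalso. apply N. exists x. repeat split; auto. intros ->. auto.
  - intros Hx. assert (x = bot a).
    { apply le_anti. apply Hx. intros z f; contradiction. apply le_bot. }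
    subst x. apply (cut_bot (le a)). apply le_bot. apply (proj2_sig B).
Qed.

Lemma Gset_cut a (B : DM (le a)) (nb : B <> DM_bot (le a)) (nt : B <> DM_top (le a)) :
  is_cut hl (Gset a (proj1_sig B)).
Proof.
  destruct (dm_interior a B nb nt) as [[x [Bx [xb xt]]] NT].
  assert (UbG : forall v nv1 nv2, Ub (le a) (proj1_sig B) v ->
                 Ub hl (Gset a (proj1_sig B)) (HIn a v nv1 nv2)).
  { intros v nv1 nv2 Hv w Hw. destruct w as [| |b w nw1 nw2]; unfold Gset in Hw; simpl in Hw |- *.
    - exact I.
    - contradiction.
    - destruct Hw as [e Hw]. destruct e. exists eq_refl. simpl in *. apply Hv. exact Hw. }
  assert (Hy : exists y, Ub (le a) (proj1_sig B) y /\ y <> top a).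
  { apply NNPP. intro N. apply NT. apply (proj2_sig B). intros u Hu.
    destruct (classic (u = top a)) as [-> | Nu]. apply le_refl. exfalso. apply N. eauto. }
  destruct Hy as [y [Uy yt]].
  assert (yb : y <> bot a).
  { intros ->. apply xb. apply le_anti. apply Uy; auto. apply le_bot. }
  intro z; split; [| apply sub_LU].
  intros Lz. destruct z as [| |b w nw1 nw2]; simpl; auto.
  - specialize (Lz _ (UbG y yb yt Uy)). simpl in Lz. exact Lz.
  - pose proof (Lz _ (UbG y yb yt Uy)) as E. apply hl_in_idx in E. subst b.
    exists eq_refl. simpl. apply (proj2_sig B). intros v Hv.
    destruct (classic (v = top a)) as [-> | vt]; [apply le_top |].
    destruct (classic (v = bot a)) as [-> | vb].
    + exfalso. apply xb. apply le_anti. apply Hv; auto. apply le_bot.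
    + specialize (Lz _ (UbG v vb vt Hv)). apply hl_in_iff in Lz. exact Lz.
Qed.

Definition G (y : HH') : DM hl :=
  match y with
  | HBot => DM_bot hl
  | HTop => DM_top hl
  | HIn a B nb nt => exist _ (Gset a (proj1_sig B)) (Gset_cut a B nb nt)
  end.

Lemma cutH_bot (C : DM hl) : proj1_sig C HBot.
Proof. apply cut_bot with (r := hl). intro; exact I. apply (proj2_sig C). Qed.

Lemma cutH_top (C : DM hl) z : proj1_sig C HTop -> proj1_sig C z.
Proof. intros Ht. eapply cut_down. exact hl_trans. apply (proj2_sig C). exact Ht. apply hl_top. Qed.

Lemma GF C : G (F C) = C.
Proof.
  unfold F. destruct (excluded_middle_informative (proj1_sig C HTop)) as [Ht | nT].
  - apply dm_eq. intro z; simpl. split; auto. intros _. apply cutH_top; auto.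
  - destruct (excluded_middle_informative _) as [ex | nex].
    + destruct (constructive_indefinite_description _ ex) as [a Ha]. simpl.
      apply dm_eq. intro z; simpl.
      destruct (struct C nT a Ha) as [y [ny1 [ny2 Hy]]].
      destruct z as [| |b w nw1 nw2]; simpl.
      * split; auto. intros _. apply cutH_bot.
      * tauto.
      * split.
        -- intros [e Hc]. destruct e. simpl in Hc. destruct Hc as [Hc | [nb' [nt' Hc]]].
           ++ contradiction.
           ++ rewrite (proof_irrelevance _ nw1 nb'), (proof_irrelevance _ nw2 nt'). exact Hc.
        -- intros Hc. pose proof (Hy _ Hc) as E. apply hl_in_idx in E. subst b.
           exists eq_refl. simpl. right. eauto.
    + apply dm_eq. intro z; simpl. rewrite LU0_iff. split.
      * intros ->. apply cutH_bot.
      * intros Hz. destruct z as [| |b w nw1 nw2].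
        -- reflexivity.
        -- contradiction.
        -- exfalso. apply nex. exists b, w, nw1, nw2. exact Hz.
Qed.

Lemma comp_Gset a (B : DM (le a)) (nb : B <> DM_bot (le a)) (nt : B <> DM_top (le a)) x :
  comp a (Gset a (proj1_sig B)) x <-> proj1_sig B x.
Proof.
  destruct (dm_interior a B nb nt) as [_ NT]. split.
  - intros [-> | [nb' [nt' [e Hx]]]].
    + apply (cut_bot (le a)). apply le_bot. apply (proj2_sig B).
    + rewrite (proof_irrelevance _ e eq_refl) in Hx. exact Hx.
  - intros Hx. destruct (classic (x = bot a)) as [Eb | Nb]; [left; exact Eb |].
    destruct (classic (x = top a)) as [Et | Nt]; [subst; contradiction |].
    right. exists Nb, Nt. simpl. exists eq_refl. exact Hx.
Qed.

Lemma FG y : F (G y) = y.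
Proof.
  destruct y as [| |a B nb nt]; unfold F.
  - destruct (excluded_middle_informative _) as [Ht | nT].
    + simpl in Ht. apply LU0_iff in Ht. discriminate.
    + destruct (excluded_middle_informative _) as [ex | nex]; auto.
      exfalso. destruct ex as [a [x [nb [nt Hx]]]]. simpl in Hx. apply LU0_iff in Hx. discriminate.
  - destruct (excluded_middle_informative _) as [Ht | nT]; auto. exfalso. apply nT. exact I.
  - destruct (excluded_middle_informative _) as [Ht | nT]; [simpl in Ht; contradiction |].
    destruct (excluded_middle_informative _) as [ex | nex].
    + destruct (constructive_indefinite_description _ ex) as [a' Ha'].
      assert (a' = a) as E.
      { destruct Ha' as [x [? [? [e _]]]]. exact e. }
      subst a'.
      assert (Eq : exist (is_cut (le a)) (comp a (proj1_sig (G (HIn a B nb nt))))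
                (comp_cut (G (HIn a B nb nt)) nT a Ha') = B).
      { apply dm_eq. intro x. simpl. apply comp_Gset; auto. }
      generalize (comp_nbot (G (HIn a B nb nt)) nT a Ha') (comp_ntop (G (HIn a B nb nt)) nT a Ha').
      rewrite Eq. intros p q.
      rewrite (proof_irrelevance _ p nb), (proof_irrelevance _ q nt). reflexivity.
    + exfalso. apply nex. destruct (dm_interior a B nb nt) as [[x [Bx [xb xt]]] _].
      exists a, x, xb, xt. simpl. exists eq_refl. exact Bx.
Qed.

Lemma G_order y1 y2 : hl' y1 y2 <-> DM_le hl (G y1) (G y2).
Proof.
  unfold DM_le.
  destruct y1 as [| |a B1 nb1 nt1]; destruct y2 as [| |b B2 nb2 nt2]; simpl.
  - split; auto.
  - split; auto.
  - split; auto. intros _ z Hz. apply LU0_iff in Hz. subst. exact I.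
  - split; [tauto|]. intros H. specialize (H HTop I). apply LU0_iff in H. discriminate.
  - split; auto.
  - split; [tauto|]. intros H. exact (H HTop I).
  - split; [tauto|]. intros H.
    destruct (dm_interior a B1 nb1 nt1) as [[x [Bx [xb xt]]] _].
    assert (Hg : Gset a (proj1_sig B1) (HIn a x xb xt)) by (exists eq_refl; exact Bx).
    apply H in Hg. apply LU0_iff in Hg. discriminate.
  - split; auto.
  - split.
    + intros [e Hle]. destruct e. simpl in Hle. intros z Hz.
      destruct z as [| |c w nw1 nw2]; simpl in *; auto.
      destruct Hz as [e Hz]. destruct e. exists eq_refl. apply Hle. exact Hz.
    + intros H.
      destruct (dm_interior a B1 nb1 nt1) as [[x [Bx [xb xt]]] NT1].
      assert (Hg : Gset a (proj1_sig B1) (HIn a x xb xt)) by (exists eq_refl; exact Bx).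
      apply H in Hg. destruct Hg as [e _]. destruct e.
      exists eq_refl. simpl. intros w Hw.
      destruct (classic (w = bot a)) as [-> | wb].
      { apply (cut_bot (le a)). apply le_bot. apply (proj2_sig B2). }
      destruct (classic (w = top a)) as [-> | wt]; [contradiction |].
      assert (Hg : Gset a (proj1_sig B1) (HIn a w wb wt)) by (exists eq_refl; exact Hw).
      apply H in Hg. destruct Hg as [e Hg]. rewrite (proof_irrelevance _ e eq_refl) in Hg. exact Hg.
Qed.

End S.

Theorem proposition3 (Lam : Type) (T : Lam -> Type)
    (le : forall a, T a -> T a -> Prop) (bot top : forall a, T a)
    (hP : forall a, is_bposet (le a) (bot a) (top a)) :
  order_iso
    (DM_le (hle Lam T le bot top))
    (hle Lam (fun a => DM (le a)) (fun a => DM_le (le a))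
         (fun a => DM_bot (le a)) (fun a => DM_top (le a))).
Proof.
  exists (F Lam T le bot top hP), (G Lam T le bot top hP).
  split; [| split].
  - apply GF.
  - apply FG.
  - intros x y. rewrite (G_order Lam T le bot top hP).
    rewrite !GF. tauto.
Qed.
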